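(* For every $\omega>0$, $$\|\mathcal F_\omega^{-1}\mathcal R\|_2<\frac{2\sqrt{\omega^2+\nu^2}}{\omega},$$ where $\nu$ is the largest diagonal entry of $D$.
   Context: Let $M\ge 1$ be an integer and let $I$ denote an identity matrix of the appropriate size. Let $T\in\mathbb R^{M\times M}$ be real symmetric positive definite. Let $D=\operatorname{diag}(d_1,\dots,d_M)$ with $d_j\ge0$, and $\nu=\max_j d_j$. Define the block matrices in $\mathbb R^{2M\times 2M}$: $$\mathcal R=\begin{bmatrix} I & T-D\\ D-T & I\end{bmatrix},\qquad \mathcal T=\begin{bmatrix} I & T\\ -T & I\end{bmatrix},\qquad \mathcal D=\begin{bmatrix} 0 & -D\\ D & 0\end{bmatrix}.$$ Thus $\mathcal R=\mathcal T+\mathcal D$. For $\omega>0$, the NASS preconditioner is $$\mathcal F_\omega=\tfrac{1}{2\omega}(\omega I+\mathcal T)(\omega I+\mathcal D).$$ *)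

(* Defs.v *)
From HB Require Import structures.
From mathcomp Require Import all_boot all_order all_algebra.
From mathcomp Require Import classical_sets reals.
Set Implicit Arguments. Unset Strict Implicit. Unset Printing Implicit Defensive.
Import Order.TTheory GRing.Theory Num.Theory.
Local Open Scope ring_scope.
Local Open Scope classical_set_scope.

Section Defs.
Variable R : realType.

Definition vnorm2 n (x : 'cV[R]_n) : R := Num.sqrt (\sum_i (x i 0) ^+ 2).

Definition opnorm2 m n (A : 'M[R]_(m, n)) : R :=
  sup [set r : R | exists2 x : 'cV[R]_n, x != 0 & r = vnorm2 (A *m x) / vnorm2 x].

Variable M : nat.

Definition Dmat (d : 'rV[R]_M) : 'M[R]_M := diag_mx d.

(* nu = max_j d_j  (d_j >= 0, M >= 1, so starting the max at 0 is harmless) *)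
Definition nu (d : 'rV[R]_M) : R := \big[Num.max/0]_(j < M) d 0 j.

Definition calR (T : 'M[R]_M) (d : 'rV[R]_M) : 'M[R]_(M + M) :=
  block_mx 1%:M (T - Dmat d) (Dmat d - T) 1%:M.

Definition calT (T : 'M[R]_M) : 'M[R]_(M + M) :=
  block_mx 1%:M T (- T) 1%:M.

Definition calD (d : 'rV[R]_M) : 'M[R]_(M + M) :=
  block_mx 0 (- Dmat d) (Dmat d) 0.

Definition NASS_F (T : 'M[R]_M) (d : 'rV[R]_M) (omega : R) : 'M[R]_(M + M) :=
  (2 * omega)^-1 *: ((omega%:M + calT T) *m (omega%:M + calD d)).

End Defs.

(* Main.v *)
Require Import Defs.
From HB Require Import structures.
From mathcomp Require Import all_boot all_order all_algebra.
From mathcomp Require Import classical_sets reals.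
From mathcomp Require Import ring lra.
Import Order.TTheory GRing.Theory Num.Theory.
Set Implicit Arguments. Unset Strict Implicit.
Local Open Scope ring_scope.

Section H.
Variable R : realType.

Definition qn n (x : 'cV[R]_n) : R := \sum_i (x i 0) ^+ 2.
Definition ip n (x y : 'cV[R]_n) : R := \sum_i (x i 0 * y i 0).

Lemma qn_ge0 n (x : 'cV[R]_n) : 0 <= qn x.
Proof. by apply: sumr_ge0 => i _; rewrite sqr_ge0. Qed.

Lemma qn_eq0 n (x : 'cV[R]_n) : qn x = 0 -> x = 0.
Proof.
move=> /eqP; rewrite psumr_eq0; last by move=> i _; rewrite sqr_ge0.
move=> /allP H; apply/matrixP => i j; rewrite (ord1 j) mxE.
by have := H i (mem_index_enum _); rewrite sqrf_eq0 => /eqP.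
Qed.

Lemma qn_gt0 n (x : 'cV[R]_n) : x != 0 -> 0 < qn x.
Proof.
move=> nx; rewrite lt_def qn_ge0 andbT; apply/eqP => /qn_eq0 h.
by rewrite h eqxx in nx.
Qed.

Lemma qnD n (x y : 'cV[R]_n) : qn (x + y) = qn x + 2 * ip x y + qn y.
Proof.
rewrite /qn /ip mulr_sumr -!big_split /=; apply: eq_bigr => i _.
rewrite mxE; ring.
Qed.

Lemma qnZ n a (x : 'cV[R]_n) : qn (a *: x) = a ^+ 2 * qn x.
Proof. rewrite /qn mulr_sumr; apply: eq_bigr => i _; rewrite mxE; ring. Qed.

Lemma qnN n (x : 'cV[R]_n) : qn (- x) = qn x.
Proof. rewrite /qn; apply: eq_bigr => i _; rewrite mxE; ring. Qed.

Lemma ipZl n a (x y : 'cV[R]_n) : ip (a *: x) y = a * ip x y.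
Proof. rewrite /ip mulr_sumr; apply: eq_bigr => i _; rewrite mxE; ring. Qed.

Lemma ip_skew n (S : 'M[R]_n) (y : 'cV[R]_n) : S^T = - S -> ip y (S *m y) = 0.
Proof.
move=> hS.
have hS' i j : S j i = - S i j by have := congr1 (fun A : 'M[R]_n => A i j) hS; rewrite !mxE.
have E : ip y (S *m y) = \sum_i \sum_j (S i j * y i 0 * y j 0).
  rewrite /ip; apply: eq_bigr => i _; rewrite mxE mulr_sumr.
  by apply: eq_bigr => j _; ring.
have E2 : ip y (S *m y) = - ip y (S *m y).
  rewrite {1}E exchange_big /= E -sumrN; apply: eq_bigr => i _.
  rewrite -sumrN; apply: eq_bigr => j _; first [rewrite (hS' i j); ring | rewrite (hS' j i); ring].
have : 2 * ip y (S *m y) = 0 by rewrite mulr_natl mulr2n {2}E2 subrr.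
by move/eqP; rewrite mulf_eq0 pnatr_eq0 /= => /eqP.
Qed.

Lemma qn_skew n a (S : 'M[R]_n) (y : 'cV[R]_n) : S^T = - S ->
  qn ((a%:M + S) *m y) = a ^+ 2 * qn y + qn (S *m y).
Proof.
move=> hS; rewrite mulmxDl mul_scalar_mx qnD ipZl ip_skew // qnZ; ring.
Qed.

Lemma qn_col m1 m2 (u : 'cV[R]_m1) (w : 'cV[R]_m2) : qn (col_mx u w) = qn u + qn w.
Proof.
rewrite /qn big_split_ord /=; congr (_ + _); apply: eq_bigr => i _.
  by rewrite col_mxEu. by rewrite col_mxEd.
Qed.

Lemma inj_unitmx n (A : 'M[R]_n) : (forall x : 'cV[R]_n, A *m x = 0 -> x = 0) -> A \in unitmx.
Proof.
move=> H; rewrite unitmxE unitfE -det_tr; apply/det0P => -[v nv hv].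
have : v^T = 0 by apply: H; rewrite -[A]trmxK -trmx_mul hv trmx0.
by move/eqP; rewrite trmx_eq0 (negPf nv).
Qed.

Lemma sq_sum_le n (z : 'I_n -> R) : (\sum_i z i) ^+ 2 <= n%:R * \sum_i z i ^+ 2.
Proof.
have E : (\sum_i z i) ^+ 2 = \sum_i \sum_j z i * z j.
  by rewrite expr2 mulr_suml; apply: eq_bigr => i _; rewrite mulr_sumr.
rewrite E.
apply: (@le_trans _ _ (\sum_(i < n) \sum_(j < n) (z i ^+ 2 / 2 + z j ^+ 2 / 2))).
  apply: ler_sum => i _; apply: ler_sum => j _.
  have := sqr_ge0 (z i - z j); lra.
under eq_bigr do rewrite big_split /= sumr_const card_ord.
rewrite big_split /= sumr_const card_ord sumrMnl -big_distrl /=.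
set S := \sum_(i < n) z i ^+ 2.
rewrite -!(mulr_natr (S / 2)).
by rewrite -mulrDl -splitr mulrC.
Qed.

Lemma single_le_sum n (f : 'I_n -> R) j : (forall i, 0 <= f i) -> f j <= \sum_i f i.
Proof.
move=> h; rewrite (bigD1 j) //= lerDl; apply: sumr_ge0 => i _; exact: h.
Qed.

Lemma qn_mul_bound m n (A : 'M[R]_(m, n)) :
  exists K, 0 <= K /\ forall y, qn (A *m y) <= K * qn y.
Proof.
exists (n%:R * \sum_i \sum_j A i j ^+ 2); split.
  apply: mulr_ge0; first exact: ler0n.
  by apply: sumr_ge0 => i _; apply: sumr_ge0 => j _; rewrite sqr_ge0.
move=> y; rewrite /qn -mulrA mulr_suml mulr_sumr; apply: ler_sum => i _.
rewrite mxE; apply: (le_trans (sq_sum_le _)).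
rewrite ler_wpM2l ?ler0n // mulr_sumr; apply: ler_sum => j _.
rewrite exprMn ler_wpM2r ?sqr_ge0 //.
by rewrite (bigD1 j) //= lerDl; apply: sumr_ge0 => l _; rewrite sqr_ge0.
Qed.

Lemma sqrt_ratio_le (a b c : R) : 0 < b -> 0 <= c -> a <= c ^+ 2 * b ->
  Num.sqrt a / Num.sqrt b <= c.
Proof.
move=> hb hc hab.
rewrite ler_pdivrMr ?sqrtr_gt0 //.
apply: (le_trans (ler_wsqrtr hab)).
by rewrite sqrtrM ?sqr_ge0 // sqrtr_sqr ger0_norm.
Qed.
End H.

Section M.
Variable R : realType.
Variable M : nat.

Lemma nu_ge (d : 'rV[R]_M) j : d 0 j <= nu d.
Proof. by rewrite /nu (bigD1 j) //= le_max lexx. Qed.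

Lemma nu_ge0 (d : 'rV[R]_M) : (forall j, 0 <= d 0 j) -> 0 <= nu d.
Proof.
move=> hd; rewrite /nu; elim/big_ind: _ => //; by move=> x y hx hy; rewrite le_max hx.
Qed.

Lemma calD_skew (d : 'rV[R]_M) : (calD d)^T = - calD d.
Proof.
rewrite /calD tr_block_mx opp_block_mx; congr block_mx;
  by rewrite ?trmx0 ?oppr0 // /Dmat ?linearN /= ?tr_diag_mx ?opprK.
Qed.

Definition Smat (T : 'M[R]_M) : 'M[R]_(M + M) := block_mx 0 T (- T) 0.

Lemma calT_S (T : 'M[R]_M) : calT T = 1%:M + Smat T.
Proof. by rewrite /calT /Smat (scalar_mx_block M M 1) add_block_mx !addr0 !add0r. Qed.

Lemma S_skew (T : 'M[R]_M) : T^T = T -> (Smat T)^T = - Smat T.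
Proof.
move=> hT; rewrite /Smat tr_block_mx opp_block_mx; congr block_mx;
  by rewrite ?trmx0 ?oppr0 // ?linearN /= ?hT ?opprK.
Qed.

Lemma calR_TD (T : 'M[R]_M) d : calR T d = calT T + calD d.
Proof.
rewrite /calR /calT /calD add_block_mx !addr0; congr block_mx; by rewrite addrC.
Qed.

Lemma qn_calD (d : 'rV[R]_M) (x : 'cV[R]_(M + M)) : (forall j, 0 <= d 0 j) ->
  qn (calD d *m x) <= nu d ^+ 2 * qn x.
Proof.
move=> hd; rewrite -[x]vsubmxK /calD mul_block_col !mul0mx add0r addr0.
rewrite !qn_col mulrDr mulNmx qnN.
have H (w : 'cV[R]_M) : qn (Dmat d *m w) <= nu d ^+ 2 * qn w.
  rewrite /qn /Dmat mulr_sumr; apply: ler_sum => i _.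
  rewrite mul_diag_mx mxE exprMn ler_wpM2r ?sqr_ge0 //.
  by rewrite ler_sqr ?nu_ge ?hd ?(nu_ge0 hd) // nnegrE ?hd ?(nu_ge0 hd).
by rewrite addrC lerD ?H.
Qed.
End M.

Section Aux.
Variable R : realType.

Lemma pt_ip (k a b : R) : 0 < k -> 2 * a * b <= k * a ^+ 2 + b ^+ 2 / k.
Proof.
move=> hk.
have E : k * a ^+ 2 + b ^+ 2 / k = (k * a - b) ^+ 2 / k + 2 * a * b.
  by field; rewrite gt_eqF.
by rewrite E lerDr divr_ge0 ?sqr_ge0 ?ltW.
Qed.

Lemma qn_add_le n (k : R) (x e : 'cV[R]_n) : 0 < k -> qn e <= k ^+ 2 * qn x ->
  qn (x + e) <= (1 + k) ^+ 2 * qn x.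
Proof.
move=> hk he.
have H : 2 * ip x e <= k * qn x + qn e / k.
  rewrite /ip /qn mulr_sumr mulr_sumr big_distrl -big_split /=; apply: ler_sum => i _.
  by rewrite mulrA pt_ip.
have H2 : qn e / k <= k * qn x.
  by rewrite ler_pdivrMr // mulrAC -expr2.
rewrite qnD.
have := qn_ge0 x; nra.
Qed.

Lemma idt n (w : R) (C D : 'M[R]_n) :
  (w%:M + C) *m (w%:M + D) - (w%:M - C) *m (w%:M - D) = (2 * w) *: (C + D).
Proof.
rewrite !mulmxDl !mulmxDr !mulmxN !mulNmx !mul_scalar_mx !mul_mx_scalar.
apply/matrixP => i j; rewrite !mxE; ring.
Qed.

Lemma comP n (w : R) (C : 'M[R]_n) :
  (w%:M - C) *m (w%:M + C) = (w%:M + C) *m (w%:M - C).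
Proof.
rewrite !mulmxDl !mulmxDr !mulmxN !mulNmx !mul_scalar_mx !mul_mx_scalar.
apply/matrixP => i j; rewrite !mxE; ring.
Qed.

Lemma inj_skew n (a : R) (S : 'M[R]_n) : a != 0 -> S^T = - S ->
  forall y : 'cV[R]_n, (a%:M + S) *m y = 0 -> y = 0.
Proof.
move=> ha hS y hy; apply: qn_eq0.
have := @qn_skew R n a S y hS; rewrite hy.
have -> : qn (0 : 'cV[R]_n) = 0 by rewrite /qn big1 // => i _; rewrite mxE expr0n.
have := qn_ge0 y; have := qn_ge0 (S *m y).
have : 0 < a ^+ 2 by rewrite exprn_even_gt0.
nra.
Qed.
End Aux.
Unset Implicit Arguments.
Theorem mainTheorem8 (R : realType) (M : nat) (T : 'M[R]_M) (d : 'rV[R]_M)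
    (omega : R) :
  (0 < M)%N ->
  T^T = T ->
  (forall x : 'cV[R]_M, x != 0 -> 0 < (x^T *m T *m x) 0 0) ->
  (forall j : 'I_M, 0 <= d 0 j) ->
  0 < omega ->
  opnorm2 (invmx (NASS_F T d omega) *m calR T d)
    < 2 * Num.sqrt (omega ^+ 2 + nu d ^+ 2) / omega.
Proof.
move=> hM hT _ hd hw.
set nv := nu d.
have hnv : 0 <= nv := nu_ge0 hd.
set C := calT T. set Dd := calD d. set S := Smat T.
have hS : S^T = - S := S_skew hT.
have hDs : Dd^T = - Dd := calD_skew d.
have hSn : (- S)^T = - (- S) by rewrite linearN /= hS.
have hDn0 : (- Dd)^T = - (- Dd) by rewrite linearN /= hDs.
set P := omega%:M + C. set Q := omega%:M + Dd.
set P' := omega%:M - C. set Q' := omega%:M - Dd.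
have eP : P = (omega + 1)%:M + S.
  by rewrite /P /C calT_S; apply/matrixP => i j; rewrite !mxE; ring.
have eP' : P' = (omega - 1)%:M + (- S).
  by rewrite /P' /C calT_S; apply/matrixP => i j; rewrite !mxE; ring.
have qP (y : 'cV[R]_(M + M)) : qn (P *m y) = (omega + 1) ^+ 2 * qn y + qn (S *m y).
  by rewrite eP qn_skew.
have qP' (y : 'cV[R]_(M + M)) : qn (P' *m y) = (omega - 1) ^+ 2 * qn y + qn (S *m y).
  by rewrite eP' qn_skew // mulNmx qnN.
have qQ (y : 'cV[R]_(M + M)) : qn (Q *m y) = omega ^+ 2 * qn y + qn (Dd *m y).
  by rewrite /Q qn_skew.
have qQ' (y : 'cV[R]_(M + M)) : qn (Q' *m y) = omega ^+ 2 * qn y + qn (Dd *m y).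
  by rewrite /Q' qn_skew // mulNmx qnN.
have injP : forall y : 'cV[R]_(M + M), P *m y = 0 -> y = 0.
  rewrite eP; apply: inj_skew => //; rewrite gt_eqF //; lra.
have injQ : forall y : 'cV[R]_(M + M), Q *m y = 0 -> y = 0.
  by apply: inj_skew => //; rewrite gt_eqF.
have uP : P \in unitmx := inj_unitmx injP.
have uQ : Q \in unitmx := inj_unitmx injQ.
have eF : NASS_F T d omega = (2 * omega)^-1 *: (P *m Q) by [].
have uF : NASS_F T d omega \in unitmx.
  rewrite eF unitmxZ ?unitmx_mul ?uP ?uQ //.
  by rewrite unitfE invr_eq0 gt_eqF //; lra.
have eR : P *m Q - P' *m Q' = (2 * omega) *: calR T d.
  by rewrite calR_TD /P /Q /P' /Q' idt.
have cP : P' *m P = P *m P' by rewrite /P /P' comP.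
have [K [hK0 hK]] := qn_mul_bound S.
set K1 := K + 1.
set N := (omega - 1) ^+ 2 + K1.
set Dn := (omega + 1) ^+ 2 + K1.
have hN : 0 < N by rewrite /N /K1; have := sqr_ge0 (omega - 1); lra.
have hDn : 0 < Dn by rewrite /Dn /K1; have := sqr_ge0 (omega + 1); lra.
have hND : N < Dn by rewrite /N /Dn; lra.
set s2 := omega ^+ 2 + nv ^+ 2.
have hw2 : 0 < omega ^+ 2 by rewrite expr2 mulr_gt0.
have hs2 : 0 < s2 by rewrite /s2; have := sqr_ge0 nv; lra.
set k2 := N * s2 / (Dn * omega ^+ 2).
have hk2 : 0 < k2 by rewrite /k2 divr_gt0 ?mulr_gt0.
set k := Num.sqrt k2.
have hk : 0 < k by rewrite sqrtr_gt0.
have kk : k ^+ 2 = k2 by rewrite sqr_sqrtr // ltW.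
have key : forall x : 'cV[R]_(M + M), x != 0 ->
    vnorm2 ((invmx (NASS_F T d omega) *m calR T d) *m x) / vnorm2 x <= 1 + k.
  move=> x nx.
  set v := (invmx (NASS_F T d omega) *m calR T d) *m x.
  have hv : NASS_F T d omega *m v = calR T d *m x by rewrite /v -mulmxA mulKVmx.
  have h1 : (P *m Q) *m v = (2 * omega) *: (calR T d *m x).
    rewrite -hv eF scalemxAl scalerA mulfV ?scale1r //; rewrite gt_eqF //; lra.
  set e := v - x. set g := Q *m e. set a := Q' *m x.
  have hg : P *m g = - (P' *m a).
    rewrite /g /e /a mulmxA mulmxBr h1 scalemxAl -eR mulmxBl mulmxA.
    by rewrite addrAC subrr add0r.
  set y := invmx P *m (- a).
  have hy : P *m y = - a by rewrite /y mulKVmx.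
  have gy : g = P' *m y.
    apply/eqP; rewrite -subr_eq0; apply/eqP; apply: injP.
    by rewrite mulmxBr hg [P *m (P' *m y)]mulmxA -cP -mulmxA hy mulmxN subrr.
  have qa : qn a = (omega + 1) ^+ 2 * qn y + qn (S *m y).
    by rewrite -qP hy qnN.
  have qg : qn g = (omega - 1) ^+ 2 * qn y + qn (S *m y) by rewrite gy qP'.
  have hSy := hK y.
  have hy0 := qn_ge0 y.
  have hSy0 := qn_ge0 (S *m y).
  have c3 : qn g * Dn <= N * qn a.
    rewrite qg qa /Dn /N /K1.
    have : 0 <= ((K + 1) * qn y - qn (S *m y)) * (4 * omega).
      by apply: mulr_ge0; lra.
    nra.
  have c4 : omega ^+ 2 * qn e <= qn g.
    by rewrite /g qQ lerDl qn_ge0.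
  have c5 : qn a <= s2 * qn x.
    rewrite /a qQ' /s2 mulrDl lerD2l; exact: qn_calD.
  have he : qn e <= k ^+ 2 * qn x.
    rewrite kk /k2 mulrAC ler_pdivlMr ?mulr_gt0 //.
    have hqe := qn_ge0 e. have hqx := qn_ge0 x. have hqa := qn_ge0 a.
    have t1 : omega ^+ 2 * qn e * Dn <= qn g * Dn by rewrite ler_pM2r.
    have t2 : N * qn a <= N * (s2 * qn x) by rewrite ler_pM2l.
    nra.
  have hvx : v = x + e by rewrite /e addrC subrK.
  apply: sqrt_ratio_le; first exact: qn_gt0.
    by have := ltW hk; lra.
  by rewrite -/(qn v) hvx; apply: qn_add_le.
rewrite /opnorm2.
have i0 : 'I_(M + M) := Ordinal (ltn_addr M hM).
set x0 : 'cV[R]_(M + M) := const_mx 1.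
have nx0 : x0 != 0.
  apply/eqP => h; have := congr1 (fun A : 'cV[R]_(M + M) => A i0 0) h.
  by rewrite !mxE => /eqP; rewrite oner_eq0.
apply: (@le_lt_trans _ _ (1 + k)).
  apply: ge_sup.
    by exists (vnorm2 ((invmx (NASS_F T d omega) *m calR T d) *m x0) / vnorm2 x0); exists x0.
  by move=> r [x nx ->]; exact: key x nx.
set s := Num.sqrt s2.
have hs : 0 <= s := sqrtr_ge0 _.
have ss : s ^+ 2 = s2 by rewrite sqr_sqrtr // ltW.
have ws : omega <= s.
  have : omega ^+ 2 <= s ^+ 2 by rewrite ss /s2 lerDl sqr_ge0.
  nra.
have k2w : k2 * omega ^+ 2 < s2.
  have -> : k2 * omega ^+ 2 = N * s2 / Dn.
    by rewrite /k2; field; rewrite ?gt_eqF //.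
  rewrite ltr_pdivrMr //; nra.
have kws : k * omega < s.
  rewrite -kk in k2w; rewrite -ss in k2w.
  have := ltW hk; have := ltW hw; nra.
rewrite ltr_pdivlMr //; nra.
Qed.
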